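(* Let $T$ be a decomposition tree of a distance-hereditary graph $G$, and let $v$ be an internal node of $T$ labeled $\oplus$ with left child $v_l$ and right child $v_r$, such that property (P) holds at $v_l$ and at $v_r$. Assume that $\hat\alpha(v_r)\le\hat\beta(v_l)$, and that neither ($\hat\alpha(v_l)=\hat\beta(v_r)=0$) nor ($\hat\alpha(v_r)=\hat\beta(v_l)=0$) holds. Then $\hat{min}(v)=\hat{min}(v_l)+\hat{min}(v_r)$.
   Context: All graphs are finite, simple, undirected. For a graph $H$ and $S\subseteq V(H)$, $N_H[S]$ is $S$ together with all vertices adjacent to a vertex of $S$, and $H[S]$ is the induced subgraph. Graphs carry a ''twin set'': a single-vertex graph on $x$ has twin set $\{x\}$. For vertex-disjoint graphs $G_l,G_r$ with twin sets $TS(G_l),TS(G_r)$: the true twin operation $G_l\otimes G_r$ has vertex set $V(G_l)\cup V(G_r)$, edge set $E(G_l)\cup E(G_r)\cup\{uw: u\in TS(G_l), w\in TS(G_r)\}$ and twin set $TS(G_l)\cup TS(G_r)$; the false twin operation $G_l\odot G_r$ has vertex set $V(G_l)\cup V(G_r)$, edge set $E(G_l)\cup E(G_r)$, twin set $TS(G_l)\cup TS(G_r)$; the attachment operation $G_l\oplus G_r$ has the same vertex and edge sets as $G_l\otimes G_r$ and twin set $TS(G_l)$. A decomposition tree $T$ of $G$ is a rooted binary tree whose leaves are in bijection with $V(G)$, each internal node having a left and a right child and a label in $\{\otimes,\odot,\oplus\}$; for each node $v$ define $\hat G(v)$ and $\hat{TS}(v)$ recursively: for a leaf $x$, the single-vertex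 graph on $x$ with twin set $\{x\}$; for an internal node $v$ with label $\circ$ and children $v_l,v_r$, $\hat G(v)=\hat G(v_l)\circ\hat G(v_r)$ with the corresponding twin set; one requires $\hat G(\text{root})=G$. Then $\hat G(v)$ is the subgraph of $G$ induced by the set $\hat V(v)$ of leaves below $v$. For a node $u$ and $0\le k\le|\hat{TS}(u)|$, call $S\subseteq\hat V(u)$ $k$-feasible if $\hat V(u)\setminus\hat{TS}(u)\subseteq N_{\hat G(u)}[S]$ and there is $X\subseteq S\cap\hat{TS}(u)$ with $|X|=k$ such that $\hat G(u)[S\setminus X]$ has a perfect matching. $\hat\gamma_k(u)$ is the minimum size of a $k$-feasible set. $\hat{min}(u)=\min\{\hat\gamma_k(u):0\le k\le|\hat{TS}(u)|\}$, and $\hat\alpha(u)$, $\hat\beta(u)$ are the smallest and the largest $k$ with $\hat\gamma_k(u)=\hat{min}(u)$. Property (P) holds at $u$ if for every $0\le k\le|\hat{TS}(u)|$: $\hat\gamma_k(u)=\hat{min}(u)+\hat\alpha(u)-k$ when $k\le\hat\alpha(u)$; $\hat\gamma_k(u)=\hat{min}(u)+k-\hat\beta(u)$ when $k\ge\hat\beta(u)$; $\hat\gamma_k(u)=\hat{min}(u)$ when $\hat\alpha(u)<k<\hat\beta(u)$ and $k-\hat\alpha(u)$ is even; and $\hat\gamma_k(u)=\hat{min}(u)+1$ otherwise. *)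

(* Defs.v *)
From mathcomp Require Import all_boot.
Set Implicit Arguments. Unset Strict Implicit. Unset Printing Implicit Defensive.

Section DH.
Variable T : finType.

(** ** Simple graphs on the vertex type [T] (vertex set = all of [T]) *)
Definition simple_graph (e : rel T) := symmetric e /\ irreflexive e.

Definition walk_in (e : rel T) (S : {set T}) (x y : T) (n : nat) : Prop :=
  exists p : seq T, [&& path e x p, last x p == y, all (fun z => z \in S) (x :: p)
                      & size p == n].

Definition is_dist (e : rel T) (S : {set T}) (x y : T) (n : nat) : Prop :=
  walk_in e S x y n /\ forall m, m < n -> ~ walk_in e S x y m.

Definition connected_in (e : rel T) (S : {set T}) : Prop :=
  forall x y, x \in S -> y \in S -> exists n, walk_in e S x y n.

Definition distance_hereditary (e : rel T) : Prop :=
  forall S : {set T}, connected_in e S ->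
  forall x y n, x \in S -> y \in S -> (is_dist e S x y n <-> is_dist e setT x y n).

Inductive dop := OTrue (* ⊗ *) | OFalse (* ⊙ *) | OAttach (* ⊕ *).

Inductive dtree := DLeaf of T | DNode of dop & dtree & dtree.

Fixpoint leaves (t : dtree) : seq T :=
  match t with DLeaf x => [:: x] | DNode _ l r => leaves l ++ leaves r end.

Definition dV (t : dtree) : {set T} := [set x in leaves t].

Fixpoint dTS (t : dtree) : {set T} :=
  match t with
  | DLeaf x => [set x]
  | DNode OAttach l _ => dTS l
  | DNode _ l r => dTS l :|: dTS r
  end.

Fixpoint dedge (t : dtree) (x y : T) : bool :=
  match t with
  | DLeaf _ => false
  | DNode o l r =>
      [|| dedge l x y, dedge r x y
        | (match o with OFalse => false | _ => true end) &&
          ((x \in dTS l) && (y \in dTS r) || (x \in dTS r) && (y \in dTS l))]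
  end.

Definition is_dtree_of (e : rel T) (t : dtree) : Prop :=
  uniq (leaves t) /\ (forall x, x \in leaves t) /\ (forall x y, e x y = dedge t x y).

Inductive subtree (v : dtree) : dtree -> Prop :=
  | sub_refl : subtree v v
  | sub_l o l r : subtree v l -> subtree v (DNode o l r)
  | sub_r o l r : subtree v r -> subtree v (DNode o l r).

Definition has_perfect_matching (e : rel T) (W : {set T}) : bool :=
  [exists M : {set {set T}},
     [forall m in M, exists x, exists y,
        [&& m == [set x; y], x != y, e x y, x \in W & y \in W]]
  && [forall x in W, #|[set m in M | x \in m]| == 1]].

Definition closed_nbhd (u : dtree) (S : {set T}) : {set T} :=
  S :|: [set x | [exists y in S, dedge u y x]].

Definition kfeasible (u : dtree) (k : nat) (S : {set T}) : bool :=
  [&& S \subset dV u,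
      (dV u :\: dTS u) \subset closed_nbhd u S
    & [exists X : {set T}, [&& X \subset S :&: dTS u, #|X| == k
                             & has_perfect_matching (dedge u) (S :\: X)]]].

(* \hat\gamma_k(u), with None = +infinity (no k-feasible set) *)
Definition gammaO (u : dtree) (k : nat) : option nat :=
  if [exists S : {set T}, kfeasible u k S]
  then Some (\big[minn/#|T|]_(S : {set T} | kfeasible u k S) #|S|)
  else None.

Definition nTS (u : dtree) : nat := #|dTS u|.

(* \hat{min}(u), None = +infinity *)
Definition minO (u : dtree) : option nat :=
  if [exists k : 'I_(nTS u).+1, gammaO u k != None]
  then Some (\big[minn/#|T|]_(k < (nTS u).+1 | gammaO u k != None) odflt 0 (gammaO u k))
  else None.

Definition alpha (u : dtree) : nat :=
  \big[minn/nTS u]_(k < (nTS u).+1 | gammaO u k == minO u) k.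

Definition beta (u : dtree) : nat :=
  \max_(k < (nTS u).+1 | gammaO u k == minO u) k.

(* Property (P), in extended arithmetic (None = +infinity) *)
Definition propP (u : dtree) : Prop :=
  forall k, k <= nTS u ->
    gammaO u k =
    omap (fun m =>
            if k <= alpha u then m + alpha u - k
            else if beta u <= k then m + k - beta u
            else if ~~ odd (k - alpha u) then m
            else m + 1) (minO u).

Definition oaddn (a b : option nat) : option nat :=
  match a, b with Some x, Some y => Some (x + y) | _, _ => None end.

End DH.

(* Main.v *)
Require Import Defs.
From mathcomp Require Import all_boot zify.
Set Implicit Arguments. Unset Strict Implicit. Unset Printing Implicit Defensive.

Section PM.
Variable T : finType.
Implicit Types (e : rel T) (W A B C : {set T}).

Lemma pmP e W : reflect (exists M : {set {set T}},
   (forall m, m \in M -> exists x y, [/\ m = [set x; y], x != y, e x y, x \in W & y \in W])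
   /\ (forall x, x \in W -> #|[set m in M | x \in m]| = 1)) (has_perfect_matching e W).
Proof.
apply: (iffP existsP) => [[M /andP[/forallP H1 /forallP H2]]|[M [H1 H2]]]; exists M.
  split.
    move=> m mM; move: (H1 m); rewrite mM /= => /existsP[x /existsP[y]].
    by case/and5P => /eqP -> ? ? ? ?; exists x, y.
  by move=> x xW; move: (H2 x); rewrite xW /= => /eqP.
apply/andP; split; apply/forallP => m; apply/implyP => mM.
  have [x [y [-> ? ? ? ?]]] := H1 m mM; apply/existsP; exists x; apply/existsP; exists y.
  by apply/and5P; split.
by rewrite H2.
Qed.

Lemma pm_uniq W (M : {set {set T}}) x m1 m2 :
  (forall x, x \in W -> #|[set m in M | x \in m]| = 1) ->
  x \in W -> m1 \in M -> m2 \in M -> x \in m1 -> x \in m2 -> m1 = m2.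
Proof.
move=> H xW h1 h2 x1 x2; have /eqP/cards1P[m0 E] := H x xW.
have : m1 \in [set m in M | x \in m] by rewrite inE h1 x1.
have : m2 \in [set m in M | x \in m] by rewrite inE h2 x2.
by rewrite E !inE => /eqP -> /eqP ->.
Qed.

Lemma disjI (A B : {set T}) : (forall x, x \in A -> x \in B -> False) -> [disjoint A & B].
Proof. move=> H; apply/pred0P => x /=; apply/negbTE/negP => /andP[/H]; exact. Qed.

Lemma disjE (A B : {set T}) x : [disjoint A & B] -> x \in A -> x \in B -> False.
Proof. by move=> D xA; rewrite (disjointFr D xA). Qed.

Lemma pm0 e : has_perfect_matching e set0.
Proof. apply/pmP; exists set0; split => [m|x]; by rewrite inE. Qed.

Lemma pm_mono e e' W : has_perfect_matching e W ->
  (forall x y, x \in W -> y \in W -> e x y -> e' x y) -> has_perfect_matching e' W.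
Proof.
move=> /pmP[M [H1 H2]] He; apply/pmP; exists M; split => // m mM.
have [x [y [-> ? ? ? ?]]] := H1 m mM; exists x, y; split => //; exact: He.
Qed.

Lemma pm_union e W1 W2 : [disjoint W1 & W2] -> has_perfect_matching e W1 ->
  has_perfect_matching e W2 -> has_perfect_matching e (W1 :|: W2).
Proof.
move=> D /pmP[M1 [H1 H2]] /pmP[M2 [K1 K2]]; apply/pmP; exists (M1 :|: M2); split.
  move=> m; rewrite inE => /orP[/H1|/K1] [x [y [-> ? ? xW yW]]]; exists x, y;
  by split => //; rewrite inE ?xW ?yW ?orbT.
move=> x; rewrite inE => /orP[xW|xW].
  transitivity #|[set m in M1 | x \in m]|; last exact: H2.
  apply: eq_card => m; rewrite !inE.
  case mM2: (m \in M2) => /=; last by rewrite orbF.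
  case xm: (x \in m); rewrite ?andbF //.
  have [a [b [E _ _ aW bW]]] := K1 m mM2; exfalso; move: xm; rewrite E !inE.
  by case/orP=> /eqP ?; subst; move/disjointFr: D => /(_ _ xW); rewrite ?aW ?bW.
transitivity #|[set m in M2 | x \in m]|; last exact: K2.
apply: eq_card => m; rewrite !inE.
case mM1: (m \in M1) => /=; last by [].
case xm: (x \in m); rewrite ?andbF ?andbT //.
have [a [b [E _ _ aW bW]]] := H1 m mM1; exfalso; move: xm; rewrite E !inE.
by case/orP=> /eqP ?; subst; move/disjointFl: D => /(_ _ xW); rewrite ?aW ?bW.
Qed.

Lemma pm_pair e x y : x != y -> e x y -> has_perfect_matching e [set x; y].
Proof.
move=> xy exy; apply/pmP; exists [set [set x; y]]; split.
  move=> m; rewrite inE => /eqP ->; exists x, y; split => //; rewrite !inE eqxx ?orbT //.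
move=> z zin; apply/eqP/cards1P; exists [set x; y]; apply/setP => m; rewrite !inE.
by case: eqP => // ->; rewrite zin.
Qed.

Lemma pm_bip e A B : [disjoint A & B] -> #|A| = #|B| ->
  (forall x y, x \in A -> y \in B -> e x y) -> has_perfect_matching e (A :|: B).
Proof.
move Hn: #|A| => n; elim: n A B Hn => [|n IH] A B HA D HB He.
  move: HA HB => /eqP; rewrite cards_eq0 => /eqP -> /esym/eqP; rewrite cards_eq0 => /eqP ->.
  by rewrite setU0; exact: pm0.
have /card_gt0P[x xA] : 0 < #|A| by rewrite HA.
have /card_gt0P[y yB] : 0 < #|B| by rewrite -HB.
have xy : x != y by apply/eqP => E; subst; move/disjointFr: D => /(_ _ xA); rewrite yB.
have -> : A :|: B = (A :\ x :|: B :\ y) :|: [set x; y].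
  apply/setP => z; rewrite !inE.
  have [->|zx] := eqVneq z x; first by rewrite xA !orbT.
  have [->|zy] := eqVneq z y; first by rewrite yB !orbT.
  by rewrite /= !orbF.
apply: pm_union; last exact: pm_pair (He _ _ xA yB).
- rewrite -setI_eq0; apply/eqP/setP => z; rewrite !inE.
  have xnB : x \notin B by rewrite (disjointFr D xA).
  have ynA : y \notin A by rewrite (disjointFl D yB).
  case: (eqVneq z x) => [->|zx]; first by rewrite (negbTE xnB) /= ?andbF.
  case: (eqVneq z y) => [->|zy]; first by rewrite (negbTE ynA) /= ?andbF.
  by rewrite /= ?andbF.
- apply: IH.
  + by have := cardsD1 x A; rewrite xA; lia.
  + apply: disjI => z; rewrite !inE => /andP[_ /(disjE D)] H /andP[_ /H] [].
  + by have := cardsD1 x A; have := cardsD1 y B; rewrite xA yB; lia.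
  + by move=> a b; rewrite !inE => /andP[_ /He] H /andP[_ /H].
Qed.

End PM.

Section Split.
Variable T : finType.
Implicit Types (e : rel T) (W A B C : {set T}) (M : {set {set T}}).

Definition Mc M A B := [set m in M | (m :&: A != set0) && (m :&: B != set0)].
Definition Cs M A B := [set x in A | [exists m in Mc M A B, x \in m]].

Lemma McE M A B m : (m \in Mc M A B) = [&& m \in M, m :&: A != set0 & m :&: B != set0].
Proof. by rewrite inE. Qed.

Lemma McC M A B : Mc M A B = Mc M B A.
Proof. by apply/setP => m; rewrite !inE (andbC (_ :&: A != set0)). Qed.

Lemma three_in_two (a b x y z : T) : x \in [set a; b] -> y \in [set a; b] ->
  z \in [set a; b] -> z != x -> z != y -> x = y.
Proof.
by rewrite !inE; case/orP=>/eqP->; case/orP=>/eqP->; case/orP=>/eqP->; rewrite ?eqxx.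
Qed.

Variables (e : rel T) (A B W : {set T}) (M : {set {set T}}).
Hypothesis esym : symmetric e.
Hypothesis D : [disjoint A & B].
Hypothesis HW : W \subset A :|: B.
Hypothesis H1 : forall m, m \in M -> exists x y, [/\ m = [set x; y], x != y, e x y, x \in W & y \in W].
Hypothesis H2 : forall x, x \in W -> #|[set m in M | x \in m]| = 1.

Lemma mW m x : m \in M -> x \in m -> x \in W.
Proof. by move=> /H1[a [b [-> _ _ aW bW]]]; rewrite !inE => /orP[]/eqP->. Qed.

Lemma CsP x : reflect (x \in A /\ exists2 m, m \in Mc M A B & x \in m) (x \in Cs M A B).
Proof.
rewrite inE; apply: (iffP andP) => [[xA /existsP[m /andP[??]]]|[xA [m ??]]].
  by split => //; exists m.
by split => //; apply/existsP; exists m; apply/andP.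
Qed.

Lemma Cs_sub : Cs M A B \subset W :&: A.
Proof.
apply/subsetP => x /CsP[xA [m]]; rewrite inE => /andP[mM _] xm.
by rewrite inE xA (mW mM xm).
Qed.

Lemma Cs_nb x : x \in Cs M A B -> exists2 y, y \in B & e x y.
Proof.
case/CsP => xA [m]; rewrite inE => /andP[mM /andP[_ /set0Pn[y]]].
rewrite inE => /andP[ym yB] xm; exists y => //.
have [a [b [E ab eab _ _]]] := H1 mM.
have xy : x != y by apply/eqP => E'; subst; apply: (disjE D xA yB).
move: xm ym xy; rewrite E !inE.
by case/orP=>/eqP->; case/orP=>/eqP->; rewrite ?eqxx // esym.
Qed.

Lemma pm_side : has_perfect_matching e (W :&: A :\: Cs M A B).
Proof.
apply/pmP; exists [set m in M | m \subset A]; split.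
  move=> m; rewrite inE => /andP[mM /subsetP mA].
  have [a [b [E ab eab aW bW]]] := H1 mM; exists a, b; split => //.
  - have aA : a \in A by apply: mA; rewrite E !inE eqxx.
    rewrite in_setD in_setI aW aA /= andbT; apply/negP => /CsP[_ [m' m'Mc am']].
    move: m'Mc; rewrite inE => /andP[m'M /andP[_ /set0Pn[z]]].
    rewrite inE => /andP[zm' zB].
    have Em : m = m' by apply: (pm_uniq H2 aW mM m'M) => //; rewrite E !inE eqxx.
    subst m'; apply: (disjE D (mA _ zm') zB).
  - have bA : b \in A by apply: mA; rewrite E !inE eqxx orbT.
    rewrite in_setD in_setI bW bA /= andbT; apply/negP => /CsP[_ [m' m'Mc am']].
    move: m'Mc; rewrite inE => /andP[m'M /andP[_ /set0Pn[z]]].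
    rewrite inE => /andP[zm' zB].
    have Em : m = m' by apply: (pm_uniq H2 bW mM m'M) => //; rewrite E !inE eqxx orbT.
    subst m'; apply: (disjE D (mA _ zm') zB).
move=> x; rewrite in_setD in_setI => /andP[xC /andP[xW xA]].
rewrite -(H2 xW); apply: eq_card => m; rewrite !inE.
case mM: (m \in M) => //=; case xm: (x \in m); rewrite ?andbF //= andbT.
apply/subsetP => z zm; have zW := mW mM zm.
move/subsetP: HW => /(_ z zW); rewrite inE => /orP[//|zB].
exfalso; move/negP: xC; apply; apply/CsP; split => //; exists m => //.
rewrite /Mc inE mM /=; apply/andP; split; apply/set0Pn; [exists x|exists z]; by rewrite inE ?xm ?zm ?xA ?zB.
Qed.

Definition psi x := odflt set0 [pick m in Mc M A B | x \in m].

Lemma psiP x : x \in Cs M A B -> psi x \in Mc M A B /\ x \in psi x.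
Proof.
case/CsP => _ [m mMc xm]; rewrite /psi; case: pickP => [m' /andP[??]|H] //=.
by move: (H m); rewrite mMc xm.
Qed.

Lemma card_Cs : #|Cs M A B| = #|Mc M A B|.
Proof.
have -> : Mc M A B = psi @: Cs M A B.
  apply/setP => m; apply/idP/imsetP => [mMc|[x xC ->]]; last by case: (psiP xC).
  have := mMc; rewrite McE => /andP[mM /andP[/set0Pn[z zmA] _]]; move: zmA; rewrite inE => /andP[zm zA].
  have zC : z \in Cs M A B by apply/CsP; split => //; exists m.
  exists z => //; case: (psiP zC) => pM zp.
  move: pM; rewrite McE => /andP[pM _].
  by apply: (pm_uniq H2 (mW mM zm) mM pM).
rewrite card_in_imset // => x y xC yC Exy.
have [pM xp] := psiP xC; have [_ yp] := psiP yC; rewrite -Exy in yp.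
move: pM; rewrite McE => /andP[pM /andP[_ /set0Pn[z]]]; rewrite inE => /andP[zp zB].
have [a [b [E _ _ _ _]]] := H1 pM.
have xA : x \in A by case/CsP: xC.
have yA : y \in A by case/CsP: yC.
rewrite E in xp yp zp; apply: (three_in_two xp yp zp).
  by apply/eqP => E'; subst; apply: (disjE D xA zB).
by apply/eqP => E'; subst; apply: (disjE D yA zB).
Qed.

End Split.

Lemma pm_split (T : finType) (e : rel T) (A B W : {set T}) :
  symmetric e -> [disjoint A & B] -> W \subset A :|: B -> has_perfect_matching e W ->
  exists C1 C2 : {set T}, [/\ C1 \subset W :&: A, C2 \subset W :&: B, #|C1| = #|C2|,
     has_perfect_matching e (W :&: A :\: C1) & has_perfect_matching e (W :&: B :\: C2)]
  /\ ((forall x, x \in C1 -> exists2 y, y \in B & e x y) /\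
     (forall y, y \in C2 -> exists2 x, x \in A & e y x)).
Proof.
move=> es D HW /pmP[M [H1 H2]].
have D' : [disjoint B & A] by rewrite disjoint_sym.
have HW' : W \subset B :|: A by rewrite setUC.
exists (Cs M A B), (Cs M B A); split; [split|split].
- exact: Cs_sub H1.
- exact: Cs_sub H1.
- by rewrite (card_Cs D H1 H2) (card_Cs D' H1 H2) McC.
- exact: pm_side HW H1 H2.
- exact: pm_side HW' H1 H2.
- exact: Cs_nb es D H1.
- exact: Cs_nb es D' H1.
Qed.

Section Tree.
Variable T : finType.
Implicit Types (u l r : dtree T) (S X : {set T}).

Lemma dV_node o l r : dV (DNode o l r) = dV l :|: dV r.
Proof. by apply/setP => x; rewrite !inE /= mem_cat. Qed.

Lemma dV_leaf (x : T) : dV (DLeaf x) = [set x].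
Proof. by apply/setP => y; rewrite !inE. Qed.
Lemma in_dV u x : (x \in dV u) = (x \in leaves u).
Proof. by rewrite inE. Qed.

Local Opaque dV.

Lemma dTS_sub u : dTS u \subset dV u.
Proof.
elim: u => [x|o l IHl r IHr]; first by rewrite dV_leaf.
rewrite dV_node; case: o => /=; try apply: setUSS => //.
exact: subset_trans IHl (subsetUl _ _).
Qed.

Lemma dedge_V u x y : dedge u x y -> x \in dV u /\ y \in dV u.
Proof.
elim: u => [//|o l IHl r IHr] /=; rewrite dV_node !in_setU.
case/or3P => [/IHl[-> ->]|/IHr[-> ->]|/andP[_ H]]; rewrite ?orbT //.
have sl := subsetP (dTS_sub l); have sr := subsetP (dTS_sub r).
by case/orP: H => /andP[]; [move=> /sl -> /sr -> | move=> /sr -> /sl ->]; rewrite ?orbT.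
Qed.

Lemma dedge_sym u : symmetric (dedge u).
Proof.
elim: u => [//|o l IHl r IHr] x y /=.
by rewrite IHl IHr (orbC ((x \in _) && _)) (andbC (x \in dTS l)) (andbC (x \in dTS r)).
Qed.

Lemma subtree_uniq (v t : dtree T) : subtree v t -> uniq (leaves t) -> uniq (leaves v).
Proof.
move=> H; elim: H => [//|o l r _ IH|o l r _ IH] /=; rewrite cat_uniq => /and3P[h1 _ h2]; exact: IH.
Qed.

Lemma node_disj o l r : uniq (leaves (DNode o l r)) -> [disjoint dV l & dV r].
Proof.
rewrite /= cat_uniq => /and3P[_ H _]; apply: disjI => x; rewrite !in_dV => xl xr.
by move/negP: H; apply; apply/hasP; exists x.
Qed.

Lemma kfP u k S : reflect [/\ S \subset dV u, dV u :\: dTS u \subset closed_nbhd u S &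
    exists X, [/\ X \subset S :&: dTS u, #|X| = k & has_perfect_matching (dedge u) (S :\: X)]]
  (kfeasible u k S).
Proof.
apply: (iffP and3P) => [[h1 h2 /existsP[X /and3P[h3 /eqP h4 h5]]]|[h1 h2 [X [h3 h4 h5]]]].
  by split => //; exists X.
by split => //; apply/existsP; exists X; rewrite h3 h4 eqxx h5.
Qed.

Lemma cnP u S x : reflect (x \in S \/ exists2 y, y \in S & dedge u y x) (x \in closed_nbhd u S).
Proof.
rewrite !inE; apply: (iffP orP) => [[->|/existsP[y /andP[??]]]|[->|[y ??]]]; auto.
  by right; exists y.
by right; apply/existsP; exists y; apply/andP.
Qed.

Lemma cardsU_disj S X : [disjoint S & X] -> #|S :|: X| = #|S| + #|X|.
Proof. by move=> D; rewrite cardsU (disjoint_setI0 D) cards0 subn0. Qed.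

Lemma subset_card X c : c <= #|X| -> exists C : {set T}, C \subset X /\ #|C| = c.
Proof.
elim: c => [|c IH] H; first by exists set0; rewrite sub0set cards0.
have [C [CX Cc]] := IH (ltnW H).
have : 0 < #|X :\: C| by rewrite cardsD (setIidPr CX); lia.
case/card_gt0P => x; rewrite inE => /andP[xC xX].
exists (x |: C); rewrite subUset sub1set xX CX cardsU1 xC Cc; split => //.
Qed.

Variables (vl vr : dtree T).
Hypothesis D : [disjoint dV vl & dV vr].
Let v := DNode OAttach vl vr.

Lemma dV_v : dV v = dV vl :|: dV vr.
Proof. exact: dV_node. Qed.
Lemma dTS_v : dTS v = dTS vl.
Proof. by []. Qed.

Lemma dedge_v x y : dedge v x y = [|| dedge vl x y, dedge vr x y |
   (x \in dTS vl) && (y \in dTS vr) || (x \in dTS vr) && (y \in dTS vl)].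
Proof. by []. Qed.

Lemma sl x : x \in dTS vl -> x \in dV vl.
Proof. exact: (subsetP (dTS_sub vl)). Qed.
Lemma sr x : x \in dTS vr -> x \in dV vr.
Proof. exact: (subsetP (dTS_sub vr)). Qed.

Lemma edge_l x y : x \in dV vl -> y \in dV vl -> dedge v x y -> dedge vl x y.
Proof.
move=> xl yl; rewrite dedge_v => /or3P[//|/dedge_V[/(disjE D xl) []]|].
by case/orP=> /andP[] => [_ /sr yr | /sr xr _]; [case: (disjE D yl yr) | case: (disjE D xl xr)].
Qed.

Lemma edge_r x y : x \in dV vr -> y \in dV vr -> dedge v x y -> dedge vr x y.
Proof.
move=> xr yr; rewrite dedge_v => /or3P[/dedge_V[/(disjE D)/(_ xr) []]|//|].
by case/orP=> /andP[] => [/sl xl _ | _ /sl yl]; [case: (disjE D xl xr) | case: (disjE D yl yr)].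
Qed.

Lemma edge_cross x y : x \in dV vl -> y \in dV vr -> dedge v x y ->
  x \in dTS vl /\ y \in dTS vr.
Proof.
move=> xl yr; rewrite dedge_v => /or3P[/dedge_V[_ /(disjE D)/(_ yr) []]|/dedge_V[/(disjE D xl) []]|].
by case/orP=> /andP[] // /sr xr _; case: (disjE D xl xr).
Qed.

Lemma edge_dom_l x y : x \in dV vl -> x \notin dTS vl -> dedge v y x -> dedge vl y x.
Proof.
move=> xl xn; rewrite dedge_v => /or3P[//|/dedge_V[_ /(disjE D xl) []]|].
by case/orP=> /andP[_ H]; [case: (disjE D xl (sr H)) | rewrite H in xn].
Qed.

Lemma edge_dom_r x y : x \in dV vr -> x \notin dTS vr -> dedge v y x -> dedge vr y x.
Proof.
move=> xr xn; rewrite dedge_v => /or3P[/dedge_V[_ /(disjE D)/(_ xr) []]|//|].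
by case/orP=> /andP[_ H]; [rewrite H in xn | case: (disjE D (sl H) xr)].
Qed.

Definition inE' := (in_setI, in_setD, in_setU, in_set1).

Lemma split_feas k S : kfeasible v k S -> exists c Sl Sr,
  [/\ kfeasible vl (k + c) Sl, kfeasible vr c Sr & #|S| = #|Sl| + #|Sr|].
Proof.
case/kfP => SV Dom [X [XS Xk pmX]].
have es := dedge_sym v.
have HW : S :\: X \subset dV vl :|: dV vr by rewrite -dV_v; exact: subset_trans (subsetDl _ _) SV.
have [C1 [C2 [[C1s C2s Cc pm1 pm2] [nb1 nb2]]]] := pm_split es D HW pmX.
have XTl : X \subset dTS vl by apply: subset_trans XS (subsetIr _ _).
exists #|C1|, (S :&: dV vl), (S :&: dV vr); split.
- apply/kfP; split; first exact: subsetIr.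
  + apply/subsetP => x; rewrite inE' => /andP[xn xl].
    have : x \in dV v :\: dTS v by rewrite dTS_v dV_v !in_setD in_setU xn xl.
    move/(subsetP Dom)/cnP => [xS|[y yS eyx]]; apply/cnP; first by left; rewrite inE' xS xl.
    have e' := edge_dom_l xl xn eyx; right; exists y => //.
    by rewrite inE' yS; case: (dedge_V e').
  + exists (X :|: C1); split.
    * rewrite subUset; apply/andP; split.
        apply/subsetP => x /(subsetP XS); rewrite !inE' => /andP[-> xT].
        by rewrite xT (sl xT).
      apply/subsetP => x xC; have := subsetP C1s x xC; rewrite !inE' => /andP[/andP[_ ->] ->] /=.
      have [y yr exy] := nb1 x xC.
      have : x \in dV vl by move: (subsetP C1s x xC); rewrite !inE' => /andP[_ ->].
      by move=> xl; case: (edge_cross xl yr exy).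
    * rewrite cardsU_disj ?Xk //; apply: disjI => x xX /(subsetP C1s); rewrite !inE' xX.
      by case/andP.
    * have -> : S :&: dV vl :\: (X :|: C1) = (S :\: X) :&: dV vl :\: C1.
        by apply/setP => x; rewrite !inE'; case: (x \in X); case: (x \in C1); case: (x \in S).
      apply: (pm_mono pm1) => x y; rewrite !inE' => /andP[_ /andP[_ xl]] /andP[_ /andP[_ yl]].
      exact: edge_l.
- apply/kfP; split; first exact: subsetIr.
  + apply/subsetP => x; rewrite inE' => /andP[xn xr].
    have xnl : x \notin dTS vl by apply/negP => /sl xl; case: (disjE D xl xr).
    have : x \in dV v :\: dTS v by rewrite dTS_v dV_v in_setD in_setU xnl xr orbT.
    move/(subsetP Dom)/cnP => [xS|[y yS eyx]]; apply/cnP; first by left; rewrite inE' xS xr.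
    have e' := edge_dom_r xr xn eyx; right; exists y => //.
    by rewrite inE' yS; case: (dedge_V e').
  + exists C2; split; [| by rewrite Cc |].
    * apply/subsetP => y yC; have := subsetP C2s y yC; rewrite !inE' => /andP[/andP[_ ->] yr] /=.
      have [x xl eyx] := nb2 y yC.
      have exy : dedge v x y by rewrite es.
      by rewrite yr; case: (edge_cross xl yr exy).
    * have -> : S :&: dV vr :\: C2 = (S :\: X) :&: dV vr :\: C2.
        apply/setP => x; rewrite !inE'.
        have h : (x \in dV vr) ==> (x \notin X).
          by apply/implyP => xr; apply/negP => /(subsetP XTl)/sl xl; case: (disjE D xl xr).
        by move: h; case: (x \in X); case: (x \in C2); case: (x \in S); case: (x \in dV vr).
      apply: (pm_mono pm2) => x y; rewrite !inE' => /andP[_ /andP[_ xl]] /andP[_ /andP[_ yl]].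
      exact: edge_r.
- have E : S = S :&: dV vl :|: S :&: dV vr by rewrite -setIUr -dV_v; apply/esym/setIidPl.
  rewrite {1}E.
  rewrite cardsU_disj; last first.
    by apply: disjI => x; rewrite !inE' => /andP[_ /(disjE D)] H /andP[_ /H].
  by [].
Qed.

End Tree.

Section Comb.
Variable T : finType.
Variables (vl vr : dtree T).
Hypothesis D : [disjoint dV vl & dV vr].
Let v := DNode OAttach vl vr.

Lemma subP (A B : {set T}) x : A \subset B -> x \in A -> x \in B.
Proof. by move/subsetP; apply. Qed.

Lemma dedge_lv x y : dedge vl x y -> dedge v x y.
Proof. by move=> h; rewrite dedge_v h. Qed.
Lemma dedge_rv x y : dedge vr x y -> dedge v x y.
Proof. by move=> h; rewrite dedge_v h orbT. Qed.
Lemma dedge_cv x y : x \in dTS vl -> y \in dTS vr -> dedge v x y.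
Proof. by move=> h1 h2; rewrite dedge_v h1 h2 !orbT. Qed.

Lemma comb_feas a c Sl Sr : kfeasible vl a Sl -> kfeasible vr c Sr -> c <= a -> 0 < a ->
  kfeasible v (a - c) (Sl :|: Sr) /\ #|Sl :|: Sr| = #|Sl| + #|Sr|.
Proof.
case/kfP => SlV Doml [Xl [XlS Xla pml]].
case/kfP => SrV Domr [Xr [XrS Xrc pmr]] ca a0.
have [Cl [ClX Clc]] : exists Cl : {set T}, Cl \subset Xl /\ #|Cl| = c by apply: subset_card; lia.
have DS : [disjoint Sl & Sr].
  by apply: disjI => x /(subP SlV) xl /(subP SrV) xr; apply: (disjE D xl xr).
split; last exact: cardsU_disj.
apply/kfP; split.
- by rewrite dV_v; apply: setUSS.
- apply/subsetP => x; rewrite dTS_v dV_v in_setD in_setU => /andP[xn /orP[xl|xr]].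
  + have : x \in dV vl :\: dTS vl by rewrite in_setD xn xl.
    move/(subP Doml)/cnP => [xS|[y yS eyx]]; apply/cnP.
      by left; rewrite in_setU xS.
    by right; exists y; [rewrite in_setU yS | exact: dedge_lv].
  + case xT: (x \in dTS vr).
      have /card_gt0P[w wX] : 0 < #|Xl| by rewrite Xla.
      have := subP XlS wX; rewrite in_setI => /andP[wS wT].
      apply/cnP; right; exists w; [by rewrite in_setU wS | exact: dedge_cv].
    have : x \in dV vr :\: dTS vr by rewrite in_setD xT xr.
    move/(subP Domr)/cnP => [xS|[y yS eyx]]; apply/cnP.
      by left; rewrite in_setU xS orbT.
    by right; exists y; [rewrite in_setU yS orbT | exact: dedge_rv].
- exists (Xl :\: Cl); split.
  + apply/subsetP => x; rewrite in_setD => /andP[_ /(subP XlS)].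
    by rewrite dTS_v !in_setI in_setU => /andP[-> ->].
  + by rewrite cardsD (setIidPr ClX) Xla Clc.
  + have -> : (Sl :|: Sr) :\: (Xl :\: Cl) = ((Sl :\: Xl) :|: (Sr :\: Xr)) :|: (Cl :|: Xr).
      apply/setP => x; rewrite !(in_setU, in_setD).
      have h1 : (x \in Cl) ==> (x \in Xl) by apply/implyP => /(subP ClX).
      have h2 : (x \in Xl) ==> (x \in Sl).
        by apply/implyP => /(subP XlS); rewrite in_setI => /andP[].
      have h3 : (x \in Xr) ==> (x \in Sr).
        by apply/implyP => /(subP XrS); rewrite in_setI => /andP[].
      have h4 : (x \in Sl) ==> (x \notin Sr).
        by apply/implyP => xl; apply/negP => xr; apply: (disjE DS xl xr).
      move: h1 h2 h3 h4.
      by case: (x \in Cl); case: (x \in Xl); case: (x \in Sl); case: (x \in Xr); case: (x \in Sr).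
    have ClT : forall x, x \in Cl -> x \in dTS vl.
      by move=> x /(subP ClX)/(subP XlS); rewrite in_setI => /andP[].
    have XrT : forall x, x \in Xr -> x \in dTS vr.
      by move=> x /(subP XrS); rewrite in_setI => /andP[].
    have ClV : forall x, x \in Cl -> x \in dV vl by move=> x /ClT /sl.
    have XrV : forall x, x \in Xr -> x \in dV vr by move=> x /XrT /sr.
    have SlV' : forall x, x \in Sl -> x \in dV vl by move=> x /(subP SlV).
    have SrV' : forall x, x \in Sr -> x \in dV vr by move=> x /(subP SrV).
    apply: pm_union.
    * apply: disjI => x; rewrite !(in_setU, in_setD) => /orP[/andP[xX xS]|/andP[xX xS]] /orP[xC|xC].
      - by move/negP: xX; apply; apply: (subP ClX xC).
      - exact: (disjE D (SlV' _ xS) (XrV _ xC)).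
      - exact: (disjE D (ClV _ xC) (SrV' _ xS)).
      - by move/negP: xX.
    * apply: pm_union.
      - apply: disjI => x; rewrite !in_setD => /andP[_ /SlV' xl] /andP[_ /SrV' xr].
        exact: (disjE D xl xr).
      - apply: (pm_mono pml) => x y _ _; exact: dedge_lv.
      - apply: (pm_mono pmr) => x y _ _; exact: dedge_rv.
    * apply: pm_bip; first by apply: disjI => x /ClV xl /XrV xr; apply: (disjE D xl xr).
        by rewrite Clc Xrc.
      by move=> x y /ClT xT /XrT yT; apply: dedge_cv.
Qed.

End Comb.

Section Big.
Variable I : eqType.
Lemma bigmin_seq (r : seq I) (P : pred I) (F : I -> nat) d :
  let b := \big[minn/d]_(i <- r | P i) F i in
  [/\ forall i, i \in r -> P i -> b <= F i,
      b = d \/ exists2 i, P i & b = F i & b <= d].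
Proof.
elim: r => [|j r IH] /=; first by rewrite big_nil; split => //; left.
rewrite big_cons; case: IH => [H1 H2 H3]; case Pj: (P j); last first.
  split => // i; rewrite inE => /orP[/eqP-> |]; [by rewrite Pj | exact: H1].
split.
- move=> i; rewrite inE => /orP[/eqP-> _|ir Pi]; first exact: geq_minl.
  by apply: leq_trans (geq_minr _ _) (H1 i ir Pi).
- case: (leqP (F j) (\big[minn/d]_(i <- r | P i) F i)) => h.
    by right; exists j => //; lia.
  case: H2 => [E|[i Pi E]]; [left|right; exists i => //]; lia.
- lia.
Qed.

Lemma bigmax_seq (r : seq I) (P : pred I) (F : I -> nat) :
  let b := \max_(i <- r | P i) F i in
  [/\ forall i, i \in r -> P i -> F i <= b & b = 0 \/ exists2 i, P i & b = F i].
Proof.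
elim: r => [|j r IH] /=; first by rewrite big_nil; split => //; left.
rewrite big_cons; case: IH => [H1 H2]; case Pj: (P j); last first.
  split => // i; rewrite inE => /orP[/eqP-> |]; [by rewrite Pj | exact: H1].
split.
- move=> i; rewrite inE => /orP[/eqP-> _|ir Pi]; first exact: leq_maxl.
  by apply: leq_trans (H1 i ir Pi) (leq_maxr _ _).
- case: (leqP (\max_(i <- r | P i) F i) (F j)) => h.
    by right; exists j => //; lia.
  case: H2 => [E|[i Pi E]]; [left|right; exists i => //]; lia.
Qed.
End Big.

Section Glue.
Variable T : finType.
Implicit Types (u : dtree T) (S : {set T}).

Lemma gamma_some u k S : kfeasible u k S -> exists2 g, gammaO u k = Some g & g <= #|S|.
Proof.
move=> H; rewrite /gammaO; case: existsP => [_|[]]; last by exists S.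
eexists; first reflexivity.
by case: (bigmin_seq (index_enum {set T}) (kfeasible u k) (fun S => #|S|) #|T|) => H1 _ _; apply: H1; rewrite ?mem_index_enum.
Qed.

Lemma gamma_att u k g : gammaO u k = Some g -> exists2 S, kfeasible u k S & #|S| = g.
Proof.
rewrite /gammaO; case: existsP => // [[S0 HS0]] [<-].
case: (bigmin_seq (index_enum {set T}) (kfeasible u k) (fun S => #|S|) #|T|) => H1 H2 H3.
case: H2 => [E|[S HS E]]; last by exists S.
exists S0 => //; have := H1 S0 (mem_index_enum _) HS0; have := max_card S0.
rewrite E /=; lia.
Qed.

Lemma gamma_le u k g : gammaO u k = Some g -> g <= #|T|.
Proof. by case/gamma_att => S _ <-; exact: max_card. Qed.

Lemma feas_k u k S : kfeasible u k S -> k <= nTS u.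
Proof.
case/kfP => _ _ [X [XS <- _]]; rewrite /nTS; apply: subset_leq_card.
exact: subset_trans XS (subsetIr _ _).
Qed.

Lemma min_att u m : minO u = Some m -> exists2 k, k <= nTS u & gammaO u k = Some m.
Proof.
rewrite /minO; case: existsP => // [[k0 Hk0]] [<-].
set P := fun k : 'I_(nTS u).+1 => gammaO u k != None.
case: (bigmin_seq (index_enum 'I_(nTS u).+1) P (fun k => odflt 0 (gammaO u k)) #|T|) => H1 H2 H3.
case: H2 => [E|[k Pk E]].
  exists k0; first by rewrite -ltnS ltn_ord.
  have := H1 k0 (mem_index_enum _) Hk0; move: Hk0; rewrite /P.
  case G: (gammaO u k0) => [g|] //= _; rewrite E => h; have := gamma_le G.
  by move=> h'; congr Some; lia.
exists k; first by rewrite -ltnS ltn_ord.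
by move: Pk E; rewrite /P; case: (gammaO u k) => // g _ ->.
Qed.

Lemma min_le u k g : gammaO u k = Some g -> k <= nTS u -> exists2 m, minO u = Some m & m <= g.
Proof.
move=> G kn; rewrite /minO.
have Hk : gammaO u (Ordinal (kn : k < (nTS u).+1)) != None by rewrite /= G.
case: existsP => [_|[]]; last by exists (Ordinal (kn : k < (nTS u).+1)).
eexists; first reflexivity.
set P := fun k : 'I_(nTS u).+1 => gammaO u k != None.
case: (bigmin_seq (index_enum 'I_(nTS u).+1) P (fun k => odflt 0 (gammaO u k)) #|T|) => H1 _ _.
by have := H1 _ (mem_index_enum _) Hk; rewrite /= G.
Qed.

Lemma beta_min u m : minO u = Some m -> gammaO u (beta u) = Some m.
Proof.
move=> Hm; have [k0 k0n G0] := min_att Hm.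
set P := fun k : 'I_(nTS u).+1 => gammaO u k == minO u.
have Pk0 : P (Ordinal (k0n : k0 < (nTS u).+1)) by rewrite /P /= G0 Hm.
case: (bigmax_seq (index_enum 'I_(nTS u).+1) P (fun k => val k)) => H1 H2.
have -> : beta u = \max_(i <- index_enum 'I_(nTS u).+1 | P i) val i by [].
case: H2 => [E|[k Pk ->]]; last by move: Pk; rewrite /P Hm => /eqP.
have := H1 _ (mem_index_enum _) Pk0; rewrite /= E.
by rewrite leqn0 => /eqP h; move: G0; rewrite h.
Qed.

Lemma alpha_min u m : minO u = Some m -> gammaO u (alpha u) = Some m.
Proof.
move=> Hm; have [k0 k0n G0] := min_att Hm.
set P := fun k : 'I_(nTS u).+1 => gammaO u k == minO u.
have Pk0 : P (Ordinal (k0n : k0 < (nTS u).+1)) by rewrite /P /= G0 Hm.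
case: (bigmin_seq (index_enum 'I_(nTS u).+1) P (fun k => val k) (nTS u)) => H1 H2 H3.
have -> : alpha u = \big[minn/nTS u]_(i <- index_enum 'I_(nTS u).+1 | P i) val i by [].
case: H2 => [E|[k Pk ->]]; last by move: Pk; rewrite /P Hm => /eqP.
have := H1 _ (mem_index_enum _) Pk0; rewrite /= E => h.
by have -> : nTS u = k0 by lia.
Qed.

End Glue.

Lemma lower (T : finType) (vl vr : dtree T) m :
  [disjoint dV vl & dV vr] -> minO (DNode OAttach vl vr) = Some m ->
  exists ml mr, [/\ minO vl = Some ml, minO vr = Some mr & ml + mr <= m].
Proof.
move=> D Hm; have [k kn G] := min_att Hm; have [S HS <-] := gamma_att G.
have [c [Sl [Sr [Hl Hr ->]]]] := split_feas D HS.
have [gl Gl gll] := gamma_some Hl; have [gr Gr grr] := gamma_some Hr.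
have [ml Ml mll] := min_le Gl (feas_k Hl).
have [mr Mr mrr] := min_le Gr (feas_k Hr).
exists ml, mr; split => //; lia.
Qed.

Unset Implicit Arguments.

Theorem lemma29 (T : finType) (e : rel T) (t v vl vr : dtree T) :
  simple_graph e ->
  distance_hereditary e ->
  is_dtree_of e t ->
  subtree v t ->
  v = DNode OAttach vl vr ->
  propP vl -> propP vr ->
  alpha vr <= beta vl ->
  ~ (alpha vl = 0 /\ beta vr = 0) ->
  ~ (alpha vr = 0 /\ beta vl = 0) ->
  minO v = oaddn (minO vl) (minO vr).
Proof.
move=> _ _ [Ut _] Hsub Ev _ _ ab _ nab.
have D : [disjoint dV vl & dV vr] by apply: (@node_disj _ OAttach); rewrite -Ev; exact: subtree_uniq Hsub Ut.
subst v.
case Hl: (minO vl) => [ml|]; case Hr: (minO vr) => [mr|] /=; last first.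
- by case Hv: (minO _) => [m|] //; have [ml [mr [h _ _]]] := lower D Hv; rewrite Hl in h.
- by case Hv: (minO _) => [m|] //; have [ml' [mr' [h _ _]]] := lower D Hv; rewrite Hl in h.
- by case Hv: (minO _) => [m|] //; have [ml' [mr' [_ h _]]] := lower D Hv; rewrite Hr in h.
have b1 : 0 < beta vl by case: (posnP (beta vl)) => // h; case: nab; split => //; lia.
have [Sl FSl El] := gamma_att (beta_min Hl).
have [Sr FSr Er] := gamma_att (alpha_min Hr).
have [F SE] := comb_feas D FSl FSr ab b1.
have [g G gle] := gamma_some F.
have [m M mle] := min_le G (feas_k F).
have [ml' [mr' [h1 h2 h3]]] := lower D M.
rewrite M; congr Some; move: h1 h2 h3; rewrite Hl Hr => -[<-] [<-] h3; lia.
Qed.
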